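(* Let $f : \{0,1\}^n \to \{0,1\}$ be a degree-1 threshold function, i.e. there are integers $a_1,\dots,a_n,b$ (of arbitrary magnitude) such that $f(x)=1$ if and only if $a_1x_1+\cdots+a_nx_n \le b$. Then for any partition of the variables $\{x_1,\dots,x_n\}$ into two parts $P_1,P_2$, where Alice sees the values of the variables in $P_1$ and Bob sees the values of the variables in $P_2$, $f$ can be computed by a public-coin randomized communication protocol with error probability $O(1/n)$ on every input and communication $O(\log n)$ bits (the constants in the $O(\cdot)$ being absolute, independent of $f$ and of the partition).
   Context: Randomized protocols are in the public-coin model: both players see all random coin flips. The error probability of the protocol on an input is the probability over the coins that it outputs a value different from $f$ of that input. *)

(* Defs.v *)
From mathcomp Require Import all_boot all_order all_algebra.
Set Implicit Arguments. Unset Strict Implicit. Unset Printing Implicit Defensive.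
Import Order.TTheory GRing.Theory Num.Theory.

Definition input (n : nat) := {ffun 'I_n -> bool}.

Definition is_threshold (n : nat) (f : input n -> bool) : Prop :=
  exists (a : 'I_n -> int) (b : int),
    forall x : input n, f x = (\sum_(i < n) a i * (x i)%:Z <= b)%R.

(* Deterministic protocol tree: at each internal node the speaker
   (true = Alice, false = Bob) sends one bit g x; leaves hold the output,
   known to both players. *)
Inductive proto (T : Type) : Type :=
| PLeaf of bool
| PNode of bool & (T -> bool) & proto T & proto T.
Arguments PLeaf {T}.

Fixpoint run (T : Type) (p : proto T) (x : T) : bool :=
  match p with
  | PLeaf b => b
  | PNode _ g l r => if g x then run r x else run l x
  end.

(* Communication cost = number of bits sent on the longest path. *)
Fixpoint depth (T : Type) (p : proto T) : nat :=
  match p with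
  | PLeaf _ => 0
  | PNode _ _ l r => (maxn (depth l) (depth r)).+1
  end.

Definition depends_only (n : nat) (A : pred 'I_n) (g : input n -> bool) : Prop :=
  forall x y : input n, (forall i, A i -> x i = y i) -> g x = g y.

(* Alice sees exactly the variables in S (= P1), Bob those outside S (= P2):
   each bit sent is a function only of the sender's variables. *)
Fixpoint valid (n : nat) (S : {set 'I_n}) (p : proto (input n)) : Prop :=
  match p with
  | PLeaf _ => True
  | PNode alice g l r =>
      depends_only (if alice then (fun i => i \in S) else (fun i => i \notin S)) g
      /\ valid S l /\ valid S r
  end.

(* Main.v *)
Require Import Defs.
From mathcomp Require Import all_boot all_order all_algebra.
From mathcomp Require Import zify.
Set Implicit Arguments. Unset Strict Implicit. Unset Printing Implicit Defensive.

Fixpoint seqs (A : Type) (T : nat) (B : seq A) : seq (seq A) :=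
  if T is T'.+1 then flatten [seq [seq a :: t | t <- seqs T' B] | a <- B]
  else [:: [::]].

Lemma count_seqsS A (P : pred (seq A)) T B :
  count P (seqs T.+1 B) = sumn [seq count (fun t => P (a :: t)) (seqs T B) | a <- B].
Proof.
rewrite /= count_flatten -map_comp; congr sumn; apply: eq_map => a /=.
by rewrite count_map.
Qed.

Lemma sumn_bound A (B : seq A) (F : A -> nat) (bad : pred A) X Y :
  (forall a, F a <= bad a * X + Y) ->
  sumn [seq F a | a <- B] <= count bad B * X + size B * Y.
Proof.
move=> H; elim: B => //= a B IH; have := H a; case: (bad a) => /=; lia.
Qed.

Lemma sumn_const A (B : seq A) c : sumn [seq c | a <- B] = size B * c.
Proof. by elim: B => //= a B ->; rewrite mulSn. Qed.

Lemma size_seqs A T (B : seq A) : size (seqs T B) = size B ^ T.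
Proof.
elim: T => // T IH.
rewrite -(count_predT (seqs _ _)) count_seqsS.
rewrite (eq_map (fun a => count_predT _)) IH sumn_const expnS //.
Qed.

Lemma all_seqs A (Q : pred A) T B :
  all Q B -> all (fun t => (size t == T) && all Q t) (seqs T B).
Proof.
move=> hB; elim: T => [|T IH] //=.
move: (seqs T B) IH => Ts hTs.
elim: B hB => //= a B' IHB /andP[Qa QB].
rewrite all_cat IHB // andbT all_map.
by apply: sub_all hTs => t /= /andP[/eqP -> ->]; rewrite Qa eqxx.
Qed.

Lemma count_all_seqs A (P : pred A) c B :
  count (all P) (seqs c B) = count P B ^ c.
Proof.
elim: c => // c IH; rewrite count_seqsS expnS.
have -> : [seq count (fun t => all P (a :: t)) (seqs c B) | a <- B]
   = [seq P a * count P B ^ c | a <- B].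
  apply: eq_map => a /=; case: (P a) => /=; first by rewrite mul1n -IH.
  by rewrite count_pred0.
move: (count P B ^ c) => X; clear IH.
by elim: B => //= a B ->; case: (P a); rewrite /= ?mul1n ?mul0n ?mulSn ?mul0n.
Qed.

Lemma card_nth (T : Type) (s : seq T) d m (p : pred T) :
  size s = m.+1 -> #|[set r : 'I_m.+1 | p (nth d s r)]| = count p s.
Proof.
move=> hs; rewrite cardsE cardE /enum_mem size_filter -enumT.
have -> : count (fun i : 'I_m.+1 => p (nth d s i)) (enum 'I_m.+1) = count (fun i => p (nth d s i)) (map val (enum 'I_m.+1)).
  by rewrite count_map.
rewrite val_enum_ord -hs -[in RHS](mkseq_nth d s) /mkseq count_map //.
Qed.

Fixpoint nbad (X A : Type) (st : X -> A -> X) (bad : X -> A -> bool) (s : X) (l : seq A) : nat :=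
  if l is a :: l' then bad s a + nbad st bad (st s a) l' else 0.

Lemma sumn_mulr A (B : seq A) (F : A -> nat) c :
  sumn [seq F a | a <- B] * c = sumn [seq F a * c | a <- B].
Proof. by elim: B => //= a B <-; rewrite mulnDl. Qed.

Lemma count_nbad (X A : Type) (st : X -> A -> X) (bad : X -> A -> bool) (B : seq A) D :
  (forall s, count (bad s) B * D <= size B) ->
  forall T s k, count (fun l => k <= nbad st bad s l) (seqs T B) * D ^ k
                <= 'C(T, k) * size B ^ T.
Proof.
move=> hB; elim=> [|T IH] s k.
  by case: k => [|k] //=; rewrite muln1 bin0.
rewrite count_seqsS sumn_mulr; case: k => [|k].
  rewrite bin0 mul1n expn0.
  apply: leq_trans (sumn_bound (bad := pred0) (X := 0) (Y := size B ^ T) _ _) _.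
    move=> a /=; rewrite muln1 -size_seqs; exact: count_size.
  by rewrite muln0 add0n expnS.
apply: leq_trans (sumn_bound (bad := bad s) (X := 'C(T, k) * size B ^ T * D)
                  (Y := 'C(T, k.+1) * size B ^ T) _ _) _.
  move=> a /=; case hb: (bad s a) => /=.
    have -> : count (fun t => k < 1 + nbad st bad (st s a) t) (seqs T B)
            = count (fun t => k <= nbad st bad (st s a) t) (seqs T B).
      by apply: eq_count => t; rewrite add1n ltnS.
    have := IH (st s a) k; move: (count _ _) ('C(T, k)) (size B ^ T) ('C(T, k.+1)) => c C P C' h.
    rewrite expnS mul1n; nia.
  have -> : count (fun t => k < 0 + nbad st bad (st s a) t) (seqs T B)
            = count (fun t => k < nbad st bad (st s a) t) (seqs T B).
    by apply: eq_count => t; rewrite add0n.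
  by rewrite mul0n add0n IH.
have := hB s.
rewrite binS expnS.
move: (count _ _) ('C(T, k)) ('C(T, k.+1)) (size B ^ T) => cb c1 c2 P h.
have h2 : cb * D * (c1 * P) <= size B * (c1 * P) by rewrite leq_mul2r h orbT.
rewrite mulnDl addnC leq_add //.
  by rewrite mulnCA mulnA.
move: h2; rewrite (mulnC (size B)) -!mulnA (mulnCA D) (mulnCA cb) (mulnC D).
by rewrite mulnCA (mulnC (size B)).
Qed.

Lemma bin_le_exp T k : 'C(T, k) <= 2 ^ T.
Proof.
elim: T k => [|T IH] [|k] //.
  by rewrite bin0 expn_gt0.
by rewrite binS expnS mul2n -addnn leq_add.
Qed.

Fixpoint par (r u : seq bool) : bool :=
  match r, u with
  | r0 :: r', u0 :: u' => (r0 && u0) (+) par r' u'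
  | _, _ => false
  end.

Definition bitsl := [:: false; true].

Lemma par_count L U V : size U = size V -> size U <= L -> U != V ->
  (count (fun r => par r U == par r V) (seqs L bitsl)).*2 = 2 ^ L.
Proof.
elim: L U V => [|L IH] [|u0 U] [|v0 V] //.
move=> [hs] hL hne.
have {hL} hL : size U <= L := hL.
rewrite count_seqsS /= addn0.
have cS : size (seqs L bitsl) = 2 ^ L by rewrite size_seqs.
case: (eqVneq U V) => [eUV|nUV].
  subst V.
  have u0v0 : u0 != v0 by move: hne; apply: contra => /eqP ->.
  clear hne.
  rewrite (eq_count (a2 := predT)); last by move=> t; rewrite eqxx.
  rewrite (eq_count (a1 := fun t => u0 (+) par t U == v0 (+) par t U) (a2 := pred0)); last first.
    by move=> t; move: u0v0; case: u0; case: v0; case: (par t U).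
  by rewrite count_predT count_pred0 addn0 cS expnS mul2n.
have IH' := IH U V hs hL nUV.
clear hne.
case: (eqVneq u0 v0) => [->|u0v0].
  rewrite (eq_count (a1 := fun t => (v0 (+) par t U) == (v0 (+) par t V))
                    (a2 := fun t => par t U == par t V)); last first.
    by move=> t; case: v0; case: (par t U); case: (par t V).
  by rewrite doubleD IH' expnS mul2n -addnn.
rewrite (eq_count (a1 := fun t => (u0 (+) par t U) == (v0 (+) par t V))
                  (a2 := predC (fun t => par t U == par t V))); last first.
  by move=> t /=; move: u0v0; case: u0; case: v0; case: (par t U); case: (par t V).
by rewrite count_predC cS expnS mul2n.
Qed.

Fixpoint bits (L z : nat) : seq bool :=
  if L is L'.+1 then odd z :: bits L' z./2 else [::].

Lemma size_bits L z : size (bits L z) = L.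
Proof. by elim: L z => //= L IH z; rewrite IH. Qed.

Lemma half_lt L z : z < 2 ^ L.+1 -> z./2 < 2 ^ L.
Proof.
move=> h; have := odd_double_half z; rewrite expnS in h.
move: (odd z) => b; rewrite -muln2; lia.
Qed.

Lemma bits_inj L z1 z2 : z1 < 2 ^ L -> z2 < 2 ^ L -> bits L z1 = bits L z2 -> z1 = z2.
Proof.
elim: L z1 z2 => [|L IH] z1 z2 /=.
  by rewrite expn0; case: z1; case: z2.
move=> h1 h2 [ho hh].
have hq := IH _ _ (half_lt h1) (half_lt h2) hh.
have e1 := odd_double_half z1; have e2 := odd_double_half z2.
rewrite ho -!muln2 in e1 e2; move: (odd z2) e1 e2 => b; lia.
Qed.

Lemma bits_cmp L z1 z2 k : z1 < 2 ^ L -> z2 < 2 ^ L ->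
  drop k.+1 (bits L z1) = drop k.+1 (bits L z2) ->
  drop k (bits L z1) != drop k (bits L z2) ->
  (z1 <= z2) = ~~ nth false (bits L z1) k.
Proof.
elim: L z1 z2 k => [|L IH] z1 z2 k /=.
  by move=> _ _ _; case: k.
move=> h1 h2; case: k => [|k] /=.
  rewrite !drop0 => /(bits_inj (half_lt h1) (half_lt h2)) hh hne.
  have ho : odd z1 != odd z2 by move: hne; apply: contra => /eqP ->; rewrite hh.
  have e1 := odd_double_half z1; have e2 := odd_double_half z2.
  move: ho e1 e2; case: (odd z1); case: (odd z2) => //= _; rewrite -!muln2; lia.
move=> hd hne.
have := IH _ _ k (half_lt h1) (half_lt h2) hd hne => <-.
have hq : z1./2 != z2./2 by move: hne; apply: contra => /eqP ->.
have e1 := odd_double_half z1; have e2 := odd_double_half z2.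
move: hq e1 e2; case: (odd z1); case: (odd z2) => /= hq; rewrite -!muln2 => e1 e2;
  move/eqP: hq => hq; apply/idP/idP => h; lia.
Qed.

Definition stepW (A : Type) (L : nat) (tr : nat -> A -> bool) (s : nat * seq nat) (a : A)
  : nat * seq nat :=
  let: (lo, stk) := s in
  let h := head L stk in
  let mid := (lo + h)./2 in
  if tr h a then
    (if h == lo then (lo, stk) else if tr mid a then (lo, mid :: stk) else (mid.+1, stk))
  else (h.+1, behead stk).

Definition badW (A : Type) (L ks : nat) (tr : nat -> A -> bool) (s : nat * seq nat) (a : A) : bool :=
  let: (lo, stk) := s in
  let h := head L stk in
  let mid := (lo + h)./2 in
  (tr h a && (h < ks)) || (tr mid a && (mid < ks)).

Definition ell s := trunc_log 2 s.*2.

Definition Psi (L ks : nat) (s : nat * seq nat) : nat :=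
  let: (lo, stk) := s in
  2 * count (fun h => h < ks) stk + ell (head L [seq h <- stk | ks <= h] - lo).

Definition Inv (ks : nat) (s : nat * seq nat) : bool :=
  let: (lo, stk) := s in
  [&& sorted ltn stk, all (fun h => lo <= h) stk, has (fun h => ks <= h) stk & lo <= ks].

Lemma ell0 : ell 0 = 0.
Proof. by rewrite /ell trunc_log0. Qed.

Lemma ellS s : 0 < s -> ell s = (trunc_log 2 s).+1.
Proof. by move=> h; rewrite /ell trunc_log2_double. Qed.

Lemma ell_mono m n : m <= n -> ell m <= ell n.
Proof. by move=> h; rewrite /ell leq_trunc_log // leq_double. Qed.

Lemma ell_half s t : 0 < s -> t <= s./2 -> ell t < ell s.
Proof.
move=> s0 ht; rewrite (ellS s0).
case: (posnP s./2) => [h0|hp].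
  by move: ht; rewrite h0 leqn0 => /eqP ->; rewrite ell0.
apply: leq_ltn_trans (ell_mono ht) _.
rewrite (ellS hp) (trunc_log2S (n := s)) //.
by move: hp; rewrite -divn2; lia.
Qed.

Lemma ell_pos s : 0 < s -> 0 < ell s.
Proof. by move=> h; rewrite ellS. Qed.

Lemma count_lt0 ks r : all (fun y => ks <= y) r -> count (fun y => y < ks) r = 0.
Proof. by elim: r => //= y r IH /andP[h1 h2]; rewrite IH // ltnNge h1. Qed.

Lemma step_lemma (A : Type) (L ks : nat) (tr : nat -> A -> bool) s a :
  (forall k a, ks <= k -> tr k a) -> Inv ks s ->
  [/\ Inv ks (stepW L tr s a),
      Psi L ks s = 0 -> stepW L tr s a = s /\ ~~ badW L ks tr s a,
      Psi L ks (stepW L tr s a) <= Psi L ks s + 2 &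
      ~~ badW L ks tr s a -> 0 < Psi L ks s -> Psi L ks (stepW L tr s a) < Psi L ks s].
Proof.
move=> htr; case: s => lo [|h rest] /=; first by [].
case/and4P=> hsort /andP[loh lorest] hhas loks.
have hmin : all (fun y => h < y) rest by apply: (order_path_min (@ltn_trans)).
have hsr : sorted ltn rest by exact: path_sorted hsort.
case: (leqP ks h) => hks.
-
  have allr : all (fun y => ks <= y) rest.
    by apply: sub_all hmin => y /= hy; lia.
  have c0 := count_lt0 allr.
  have trh := htr h a hks; rewrite trh /=.
  rewrite c0 addn0 muln0 add0n.
  case: eqP => [hlo|hlo].
  + subst h; rewrite subnn ell0 /Psi /Inv /=.
    rewrite hks hsort leqnn lorest loks (ltnNge lo ks) hks c0 subnn ell0 /=.
    rewrite addnn -divn2 -muln2 mulnK // ltnNge hks andbF.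
    by split.
  + have lo_h : lo < h by lia.
    set mid := (lo + h)./2.
    have hmid1 : lo <= mid by rewrite /mid -divn2; lia.
    have hmid2 : mid < h by rewrite /mid -divn2; lia.
    have hmidlo : mid - lo <= (h - lo)./2 by rewrite /mid -!divn2; lia.
    have hmidh : h - mid.+1 <= (h - lo)./2 by rewrite /mid -!divn2; lia.
    have hpos : 0 < ell (h - lo) by rewrite ell_pos // subn_gt0.
    have hpos' : (ell (h - lo) == 0) = false by apply/negbTE; rewrite -lt0n.
    case trm: (tr mid a) => /=.
    * case: (leqP ks mid) => hkm /=.
      -- rewrite /Psi /Inv /= (ltnNge h ks) hks c0 hmid2 hsort hmid1 loh lorest loks /=.
         have := ell_half (s := h - lo) (t := mid - lo) ltac:(lia) hmidlo.
         split => //; [by move=> /eqP; rewrite hpos' | lia].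
      -- rewrite /Psi /Inv /= hks (ltnNge h ks) hks c0 hmid2 hsort hmid1 loh lorest loks /=.
         split => //; [by move=> /eqP; rewrite hpos' | lia].
    * have hkm : mid < ks by apply/negPn/negP => hkm; move: trm; rewrite htr // leqNgt.
      rewrite /Psi /Inv /= hks c0 hsort hmid2 (sub_all _ hmin) /=; last by move=> y /=; lia.
      rewrite (ltnNge h ks) hks /=.
      have := ell_half (s := h - lo) (t := h - mid.+1) ltac:(lia) hmidh.
      split => //; [by move=> /eqP; rewrite hpos' | lia].
-
  have hks' : (ks <= h) = false by rewrite leqNgt hks.
  have hrest : has (fun y => ks <= y) rest by move: hhas; rewrite hks'.
  have hclo : lo <= head L [seq y <- rest | ks <= y].
    move: hrest lorest; elim: (rest) => //= y r IH.
    case: (leqP ks y) => hy /=; first by move=> _ /andP[]; lia.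
    by move=> hr /andP[_ hr']; apply: IH.
  have hch : h < head L [seq y <- rest | ks <= y].
    move: hrest hmin; elim: (rest) => //= y r IH.
    case: (leqP ks y) => hy /=; first by move=> _ /andP[]; lia.
    by move=> hr /andP[_ hr']; apply: IH.
  move: hclo hch; set hc := head L _ => hclo hch.
  set cr := count (fun y => y < ks) rest.
  rewrite /= in hks' *.
  case trh: (tr h a) => /=.
  + case: eqP => [hlo|hlo].
    * subst h; rewrite /Psi /Inv /= hks' hsort leqnn lorest hrest loks (ltnNge lo ks) hks' -/cr -/hc /=.
      by split => //; lia.
    * set mid := (lo + h)./2.
      have lo_h : lo < h by lia.
      have hmid1 : lo <= mid by rewrite /mid -divn2; lia.
      have hmid2 : mid < h by rewrite /mid -divn2; lia.
      have hkm : mid < ks by lia.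
      case trm: (tr mid a) => /=.
      -- have hkm' : (ks <= mid) = false by apply/negbTE; rewrite -ltnNge.
         rewrite /Psi /Inv /= hks' hkm' hmid2 hsort hmid1 loh lorest hrest loks.
         rewrite (ltnNge mid ks) hkm' (ltnNge h ks) hks' -/cr -/hc /=.
         by split => //; lia.
      -- rewrite /Psi /Inv /= hks' hsort hmid2 (sub_all _ hmin) /=; last by move=> y /=; lia.
         rewrite hrest (ltnNge h ks) hks' -/cr -/hc /=.
         have := ell_mono (_ : hc - mid.+1 <= hc - lo).
         move=> e; have := e ltac:(lia); split => //; lia.
  + rewrite /Psi /Inv /= hsr (sub_all _ hmin) /=; last by move=> y /=.
    rewrite hrest -/cr -/hc /=.
    have e := ell_mono (_ : hc - h.+1 <= hc - lo).
    have e' := e ltac:(lia).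
    split => //; lia.
Qed.

Fixpoint walkW (A : Type) (L : nat) (tr : nat -> A -> bool) s (l : seq A) :=
  if l is a :: l' then walkW L tr (stepW L tr s a) l' else s.

Lemma walk_lemma (A : Type) (L ks : nat) (tr : nat -> A -> bool) (l : seq A) s :
  (forall k a, ks <= k -> tr k a) -> Inv ks s ->
  [/\ Inv ks (walkW L tr s l),
      Psi L ks s = 0 -> Psi L ks (walkW L tr s l) = 0 &
      Psi L ks (walkW L tr s l) = 0 \/
      Psi L ks (walkW L tr s l) + size l <= Psi L ks s + 3 * nbad (stepW L tr) (badW L ks tr) s l].
Proof.
move=> htr; elim: l s => [|a l IH] s hs /=.
  by split => //; right; lia.
have [i1 i2 i3 i4] := step_lemma L a htr hs.
have [j1 j2 j3] := IH _ i1.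
split => //.
  by move=> h0; have [e _] := i2 h0; apply: j2; rewrite e.
case: (posnP (Psi L ks s)) => hp.
  have [e nb] := i2 hp; left; apply: j2; rewrite e; exact: hp.
case: j3 => [->|j3]; first by left.
right; case hb: (badW L ks tr s a) => /=.
  rewrite mulnDr muln1; lia.
have := i4 (negbT hb) hp; rewrite add0n; lia.
Qed.

Lemma psi0_head (L ks : nat) s : Inv ks s -> Psi L ks s = 0 -> head L s.2 = ks.
Proof.
case: s => lo [|h rest] //= /and4P[hsort /andP[loh lorest] hhas loks].
move=> /eqP; rewrite addn_eq0 muln_eq0 /= => /andP[hc he].
have he' : head L [seq y <- h :: rest | ks <= y] - lo = 0.
  by apply/eqP; move: he; apply: contraLR; rewrite -!lt0n; apply: ell_pos.
move: hc he'; rewrite /= addn_eq0 => /andP[hk _].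
have hks : ks <= h by rewrite leqNgt; move: hk; case: (h < ks).
by rewrite hks /=; lia.
Qed.

Definition testres n (uA vB : input n -> seq bool) k (rho : seq (seq bool)) x :=
  all (fun r => par r (drop k (uA x)) == par r (drop k (vB x))) rho.

Fixpoint testP n (uA vB : input n -> seq bool) k (rho : seq (seq bool))
  (ct cf : proto (input n)) : proto (input n) :=
  match rho with
  | [::] => ct
  | r :: rho' =>
    PNode true (fun x => par r (drop k (uA x)))
      (PNode false (fun x => par r (drop k (vB x))) (testP uA vB k rho' ct cf) cf)
      (PNode false (fun x => par r (drop k (vB x))) cf (testP uA vB k rho' ct cf))
  end.

Definition finalP n (uA : input n -> seq bool) L (s : nat * seq nat) : proto (input n) :=
  if head L s.2 is k.+1 then PNode true (fun x => nth false (uA x) k) (PLeaf true) (PLeaf false)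
  else PLeaf true.

Fixpoint build n (uA vB : input n -> seq bool) L (s : nat * seq nat)
   (rhos : seq (seq (seq bool))) : proto (input n) :=
  match rhos with
  | [::] => finalP uA L s
  | rho :: rhos' =>
    let: (lo, stk) := s in
    let h := head L stk in
    let mid := (lo + h)./2 in
    testP uA vB h rho
      (if h == lo then build uA vB L (lo, stk) rhos'
       else testP uA vB mid rho (build uA vB L (lo, mid :: stk) rhos')
                               (build uA vB L (mid.+1, stk) rhos'))
      (build uA vB L (h.+1, behead stk) rhos')
  end.

Lemma run_testP n (uA vB : input n -> seq bool) k rho ct cf x :
  run (testP uA vB k rho ct cf) x = if testres uA vB k rho x then run ct x else run cf x.
Proof.
rewrite /testres; elim: rho => [|r rho IH] //=.
by rewrite IH; case: (par r _); case: (par r _) => //=; case: (all _ _).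
Qed.

Lemma run_build n (uA vB : input n -> seq bool) L s rhos x :
  run (build uA vB L s rhos) x =
  run (finalP uA L (walkW L (fun k rho => testres uA vB k rho x) s rhos)) x.
Proof.
elim: rhos s => [|rho rhos IH] [lo stk] //=.
rewrite run_testP; case: (testres _ _ _ _ _) => //=.
case: eqP => _; first exact: IH.
by rewrite run_testP; case: (testres _ _ _ _ _).
Qed.

Lemma depth_testP n (uA vB : input n -> seq bool) k rho ct cf :
  depth (testP uA vB k rho ct cf) <= 2 * size rho + maxn (depth ct) (depth cf).
Proof.
elim: rho => [|r rho IH] /=; first by lia.
lia.
Qed.

Lemma depth_build n (uA vB : input n -> seq bool) L c s rhos :
  all (fun rho => size rho == c) rhos ->
  depth (build uA vB L s rhos) <= 4 * c * size rhos + 1.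
Proof.
elim: rhos s => [|rho rhos IH] [lo stk] /=.
  by rewrite /finalP /=; case: (head L stk) => [|k] /=; lia.
case/andP=> /eqP hs hr.
apply: leq_trans (depth_testP _ _ _ _ _ _) _.
have h1 := IH (lo, stk) hr.
have h3 := IH (((lo + head L stk)./2).+1, stk) hr.
have h4 := IH ((head L stk).+1, behead stk) hr.
have h5 := IH (lo, (lo + head L stk)./2 :: stk) hr.
have hin : depth (if head L stk == lo then build uA vB L (lo, stk) rhos
       else testP uA vB (lo + head L stk)./2 rho (build uA vB L (lo, (lo + head L stk)./2 :: stk) rhos)
                               (build uA vB L ((lo + head L stk)./2.+1, stk) rhos))
           <= 2 * c + (4 * c * size rhos + 1).
  case: eqP => _; first by lia.
  apply: leq_trans (depth_testP _ _ _ _ _ _) _; rewrite hs; lia.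
move: hin; rewrite hs /=; lia.
Qed.

Lemma valid_testP n (S : {set 'I_n}) (uA vB : input n -> seq bool) k rho ct cf :
  (forall x y : input n, (forall i, i \in S -> x i = y i) -> uA x = uA y) ->
  (forall x y : input n, (forall i, i \notin S -> x i = y i) -> vB x = vB y) ->
  valid S ct -> valid S cf -> valid S (testP uA vB k rho ct cf).
Proof.
move=> hu hv vt vf; elim: rho => [|r rho IH] //=.
have dA : depends_only (fun i => i \in S) (fun x => par r (drop k (uA x))).
  by move=> x y hxy /=; rewrite (hu x y hxy).
have dB : depends_only (fun i => i \notin S) (fun x => par r (drop k (vB x))).
  by move=> x y hxy /=; rewrite (hv x y hxy).
by do !split.
Qed.

Lemma valid_build n (S : {set 'I_n}) (uA vB : input n -> seq bool) L s rhos :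
  (forall x y : input n, (forall i, i \in S -> x i = y i) -> uA x = uA y) ->
  (forall x y : input n, (forall i, i \notin S -> x i = y i) -> vB x = vB y) ->
  valid S (build uA vB L s rhos).
Proof.
move=> hu hv; elim: rhos s => [|rho rhos IH] [lo stk] /=.
  rewrite /finalP; case: (head L stk) => [|k] //=; split => //.
  by move=> x y hxy; rewrite (hu x y hxy).
apply: valid_testP => //; case: eqP => _ //.
exact: valid_testP.
Qed.

Lemma bad_bound (A : Type) (Bs : seq A) L ks (tr : nat -> A -> bool) s c :
  (forall k, k < ks -> count (tr k) Bs * 2 ^ c.+1 <= size Bs) ->
  count (badW L ks tr s) Bs * 2 ^ c <= size Bs.
Proof.
move=> hk; case: s => lo stk; rewrite /badW.
set h := head L stk; set mid := (lo + h)./2.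
have e k : count (fun a => tr k a && (k < ks)) Bs * 2 ^ c.+1 <= size Bs.
  case: (ltnP k ks) => hk'.
    rewrite (eq_count (a2 := tr k)); first exact: hk.
    by move=> a /=; rewrite andbT.
  rewrite (eq_count (a2 := pred0)); first by rewrite count_pred0.
  by move=> a /=; rewrite andbF.
have := count_predUI (fun a => tr h a && (h < ks)) (fun a => tr mid a && (mid < ks)) Bs.
have := e h; have := e mid.
rewrite (eq_count (a1 := fun a => (tr h a && (h < ks)) || (tr mid a && (mid < ks)))
                  (a2 := predU (fun a => tr h a && (h < ks)) (fun a => tr mid a && (mid < ks)))) //.
rewrite expnS.
move: (count (predU _ _) Bs) (count (predI _ _) Bs) (count (fun a => tr h a && _) Bs)
      (count (fun a => tr mid a && _) Bs) (2 ^ c) => cb ci c1 c2 X h1 h2 h3.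
have : cb * X <= (c1 + c2) * X by rewrite leq_mul2r; apply/orP; right; lia.
nia.
Qed.

Import Order.TTheory GRing.Theory Num.Theory.

Definition rkf n (g1 g2 : input n -> int) (z : int) : nat :=
  #|[set y | (g1 y < z)%R]| + #|[set y | (g2 y < z)%R]|.

Lemma card_input n : #|[set: input n]| = 2 ^ n.
Proof. by rewrite cardsT card_ffun card_bool card_ord. Qed.

Lemma card_lt_miss n (A : {set input n}) x : x \notin A -> #|A| < 2 ^ n.
Proof.
move=> hx; rewrite -card_input cardsT -(cardsC A) -addn1 leq_add2l card_gt0.
by apply/set0Pn; exists x; rewrite inE.
Qed.

Lemma card_le_all n (A : {set input n}) : #|A| <= 2 ^ n.
Proof. by rewrite -card_input subset_leq_card // subsetT. Qed.

Lemma rk_props n (g1 g2 : input n -> int) x :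
  [/\ (g1 x <= g2 x)%R = (rkf g1 g2 (g1 x) <= rkf g1 g2 (g2 x)),
      rkf g1 g2 (g1 x) < 2 ^ n.+1 & rkf g1 g2 (g2 x) < 2 ^ n.+1].
Proof.
rewrite /rkf; split.
- case: leP => h.
  + apply/esym; rewrite leq_add // subset_leq_card //; apply/subsetP => y;
      rewrite !inE => hy; exact: lt_le_trans hy h.
  + apply/esym/negbTE; rewrite -ltnNge.
    rewrite -addnS; apply: leq_add; [apply: subset_leq_card | apply: proper_card].
    * apply/subsetP => y; rewrite !inE => hy; exact: lt_trans hy h.
    * apply/properP; split.
        by apply/subsetP => y; rewrite !inE => hy; exact: lt_trans hy h.
      by exists x; rewrite !inE ?ltxx ?h.
- have h1 : #|[set y | (g1 y < g1 x)%R]| < 2 ^ n by apply: (card_lt_miss (x := x)); rewrite inE ltxx.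
  have h2 := card_le_all [set y | (g2 y < g1 x)%R].
  by rewrite expnS mul2n -addnn; apply: leq_add h1 h2.
- have h1 : #|[set y | (g2 y < g2 x)%R]| < 2 ^ n by apply: (card_lt_miss (x := x)); rewrite inE ltxx.
  have h2 := card_le_all [set y | (g1 y < g2 x)%R].
  by rewrite expnS mul2n -addnn addnC; apply: leq_add h1 h2.
Qed.

Import Order.TTheory GRing.Theory Num.Theory.

Theorem lemma4 :
  exists C1 C2 : nat,
    forall n : nat, 2 <= n ->
    forall f : input n -> bool, is_threshold f ->
    forall S : {set 'I_n},
    exists (m : nat) (P : 'I_m.+1 -> proto (input n)),
      (forall r, valid S (P r)) /\
      (forall r, depth (P r) <= C2 * trunc_log 2 n) /\
      (forall x : input n, #|[set r | run (P r) x != f x]| * n <= C1 * m.+1).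
Proof.
exists 1, 721 => n n2 f [a [b hf]] S.
pose sA (y : input n) : int := (\sum_(i < n | i \in S) a i * (y i)%:Z)%R.
pose sB (y : input n) : int := (b - \sum_(i < n | i \notin S) a i * (y i)%:Z)%R.
pose L := n.+1.
pose uA (x : input n) := bits L (rkf sA sB (sA x)).
pose vB (x : input n) := bits L (rkf sA sB (sB x)).
pose c := 10.
pose B0 := seqs L bitsl.
pose Bs := seqs c B0.
pose K := (trunc_log 2 n).+1.
pose T := 9 * K.
pose Om := seqs T Bs.
have sB0 : size B0 = 2 ^ L by rewrite /B0 size_seqs.
have sBs : size Bs = (2 ^ L) ^ c by rewrite /Bs size_seqs sB0.
have sOm : size Om = ((2 ^ L) ^ c) ^ T by rewrite /Om size_seqs sBs.
have hOm : size Om = (size Om).-1.+1 by rewrite prednK // sOm !expn_gt0.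
have hall : all (fun t => (size t == T) && all (fun rho => size rho == c) t) Om.
  apply: (all_seqs (Q := fun rho : seq (seq bool) => size rho == c)).
  apply: (@sub_all _ (fun t => (size t == c) && all predT t)).
    by move=> t /andP[].
  by apply: all_seqs; apply/allP.
exists (size Om).-1, (fun r => build uA vB L (0, [:: L]) (nth [::] Om r)).
split; [|split].
- move=> r; apply: valid_build => x y hxy.
    rewrite /uA; have -> : sA x = sA y by apply: eq_bigr => i hi; rewrite hxy.
    by [].
  rewrite /vB; have -> : sB x = sB y.
    by rewrite /sB; congr (_ - _)%R; apply: eq_bigr => i hi; rewrite hxy.
  by [].
- move=> r.
  have hr : r < size Om by rewrite [X in _ < X]hOm ltn_ord.
  have := allP hall _ (mem_nth [::] hr) => /andP[_ hc].
  apply: leq_trans (depth_build _ _ _ _ hc) _.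
  have := allP hall _ (mem_nth [::] hr) => /andP[/eqP -> _].
  have : 0 < trunc_log 2 n by rewrite trunc_log_gt0.
  rewrite /T /K /c; lia.
move=> x.
rewrite (@card_nth _ Om [::] _ (fun l => run (build uA vB L (0, [:: L]) l) x != f x)) //.
set U := uA x; set V := vB x.
set z1 := rkf sA sB (sA x); set z2 := rkf sA sB (sB x).
have [hcmp hz1 hz2] := rk_props sA sB x.
have hfx : f x = (z1 <= z2).
  rewrite hf (bigID (fun i => i \in S)) /= -lerBrDr -/(sA x) -/(sB x) hcmp //.
have hex : exists k, drop k U == drop k V.
  by exists L; rewrite !drop_oversize ?size_bits.
case: (ex_minnP hex) => ks hks hmin.
have hP : forall k, (drop k U == drop k V) = (ks <= k).
  move=> k; apply/idP/idP => h; first exact: hmin.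
  by rewrite -(subnK h) -!drop_drop (eqP hks).
have ksL : ks <= L by apply: hmin; rewrite !drop_oversize ?size_bits.
pose tr := fun k (rho : seq (seq bool)) => testres uA vB k rho x.
have htr : forall k rho, ks <= k -> tr k rho.
  move=> k rho hk; rewrite /tr /testres; apply/allP => r _.
  by move: (hP k); rewrite hk -/U -/V => /eqP ->.
have hfp : forall k, k < ks -> count (tr k) Bs * 2 ^ c <= size Bs.
  move=> k hk.
  have hne : drop k U != drop k V by rewrite hP -ltnNge.
  have -> : count (tr k) Bs = count (all (fun r => par r (drop k U) == par r (drop k V))) Bs by [].
  rewrite /Bs count_all_seqs -expnMn muln2 par_count ?size_drop ?size_bits ?leq_subr //.
  by rewrite size_seqs sB0.
have hbad : forall s, count (badW L ks tr s) Bs * 2 ^ 9 <= size Bs.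
  by move=> s; apply: bad_bound => k hk; apply: hfp.
have hcnt := @count_nbad _ _ (stepW L tr) _ _ _ hbad T (0, [:: L]) (2 * K).
have hInv0 : Inv ks (0, [:: L]) by rewrite /Inv /= ksL.
have n0 : 0 < n by lia.
have hPsi0 : Psi L ks (0, [:: L]) <= 3 * K.
  rewrite /Psi /= (ltnNge L ks) ksL /= subn0 ellS //.
  have := leq_trunc_log 2 (_ : n.+1 <= n.*2); rewrite trunc_log2_double // /K /L.
  move=> h; have := h ltac:(lia); lia.
have hkey : forall l, size l = T -> run (build uA vB L (0, [:: L]) l) x != f x ->
    2 * K <= nbad (stepW L tr) (badW L ks tr) (0, [:: L]) l.
  move=> l hl; rewrite run_build -/tr.
  have [i1 i2 i3] := @walk_lemma _ L ks tr l _ htr hInv0.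
  case: (posnP (Psi L ks (walkW L tr (0, [:: L]) l))) => hw.
  - have hh := psi0_head i1 hw.
    rewrite /finalP hh hfx.
    case eks: ks => [|k'] /=.
      have e0 := hP 0; rewrite eks drop0 /= in e0.
      have e1 : z1 = z2 by apply: (bits_inj hz1 hz2); apply/eqP; exact: e0.
      by rewrite e1 leqnn.
    have e1 := hP k'.+1; have e2 := hP k'.
    rewrite eks leqnn in e1; rewrite eks ltnn in e2.
    rewrite (bits_cmp hz1 hz2 (eqP e1)) ?e2 //.
    by case: (nth false _ _).
  - case: i3 => [h0|hb]; first by rewrite h0 in hw.
    move: hb; rewrite hl /T; lia.
have hle : count (fun l => run (build uA vB L (0, [:: L]) l) x != f x) Om
    <= count (fun l => 2 * K <= nbad (stepW L tr) (badW L ks tr) (0, [:: L]) l) Om.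
  rewrite (@eq_in_count _ _ (fun l => (run (build uA vB L (0, [:: L]) l) x != f x) && (size l == T))).
    by apply: sub_count => l /andP[h1 /eqP h2]; apply: hkey.
  by move=> l hl; have /andP[/eqP -> _] := allP hall l hl; rewrite eqxx andbT.
have hbin := bin_le_exp T (2 * K).
have hnK : n <= 2 ^ (9 * K).
  have h1 := trunc_log_ltn n (isT : 1 < 2).
  have h2 : 2 ^ K <= 2 ^ (9 * K) by apply: leq_pexp2l => //; lia.
  rewrite /K in h2 *; lia.
rewrite mul1n -hOm.
move: hle hcnt; rewrite -/Om.
have -> : (2 ^ 9) ^ (2 * K) = 2 ^ T * 2 ^ (9 * K) by rewrite -expnM -expnD /T; congr (_ ^ _); lia.
have -> : size Bs ^ T = size Om by rewrite /Om size_seqs.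
move: (count _ Om) (count _ Om) => Cb E hE hC.
have hC' : Cb * 2 ^ (9 * K) <= size Om.
  rewrite -(@leq_pmul2l (2 ^ T)) ?expn_gt0 //.
  apply: leq_trans _ (leq_mul hbin (leqnn _)).
  by move: hC; rewrite mulnCA.
apply: leq_trans _ hC'; exact: leq_mul.
Qed.
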